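(* Let $\gamma\in(0,1)$ be a constant. Consider Algorithm MWHVC (described in the context) run in the CONGEST model on a hypergraph $G=(V,E)$ of rank $f$ and maximum degree $\Delta\ge 3$ with nonnegative vertex weights $w$, with parameters $\varepsilon\in(0,1]$, $\beta=\varepsilon/(f+\varepsilon)$ and multiplier $$\alpha=\begin{cases}\left(\frac{\log\Delta}{\log\log\Delta}\right)^{1-\gamma} & \text{if } \frac{f}{\beta}<\left(\frac{\log\Delta}{\log\log\Delta}\right)^{\gamma},\\ 2 & \text{otherwise.}\end{cases}$$ Then the round complexity of the algorithm is $$O\left(\frac{\log\Delta}{\log\log\Delta}+\left(\frac{f^2}{\varepsilon}\right)^{1/\gamma}\cdot\log\log\Delta\right).$$
   Context: Let $G=(V,E)$ be a hypergraph with $n=|V|$: each hyperedge is a nonempty subset of $V$ of size at most $f$ (rank $f$). Vertices have nonnegative weights $w(v)$; weights and degrees are assumed polynomial in $n$. For $v\in V$, $E(v)=\{e\in E: v\in e\}$; $\Delta=\max_v |E(v)|\ge 3$. A hyperedge $e$ is covered by $C\subseteq V$ if $e\cap C\neq\emptyset$. The computation is distributed in synchronous rounds (CONGEST: messages of $O(\log n)$ bits) on the bipartite network with node set $V\cup E$ and a link between $v$ and $e$ iff $v\in e$. Parameters: $\varepsilon\in(0,1]$, $\beta=\varepsilon/(f+\varepsilon)$, and a multiplier $\alpha>1$. Algorithm MWHVC: Initialize $C\gets\emptyset$ and $E'(v)\gets E(v)$ for every $v$. Iteration $0$: every hyperedge $e$ sets $\mathrm{deal}_0(e)=\beta\cdot\min_{v\in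 e} w(v)/|E(v)|$ and $\delta_0(e)=\mathrm{deal}_0(e)$. For $i=1,2,\dots$: (a) every vertex $v\notin C$ (not terminated) checks whether $\sum_{e\in E(v)}\delta_{i-1}(e)\ge(1-\beta)w(v)$; if so, $v$ joins $C$, tells every $e\in E'(v)$ that $e$ is covered, and terminates. (b) Every uncovered hyperedge that receives such a message becomes covered, informs all its vertices, and terminates. (c) Every vertex $v\notin C$ that is told $e$ is covered sets $E'(v)\gets E'(v)\setminus\{e\}$; if $E'(v)=\emptyset$, $v$ terminates without joining $C$. (d) Every vertex $v\notin C$ sends ''raise'' to all $e\in E'(v)$ if $\sum_{e\in E'(v)}\mathrm{deal}_{i-1}(e)\le(\beta/\alpha)w(v)$, and otherwise sends ''stuck'' to all $e\in E'(v)$. (e) Every uncovered hyperedge $e$ sets $\mathrm{deal}_i(e)=\mathrm{deal}_{i-1}(e)$ if it received some ''stuck'' message, and $\mathrm{deal}_i(e)=\alpha\cdot\mathrm{deal}_{i-1}(e)$ otherwise, and $\delta_i(e)=\delta_{i-1}(e)+\mathrm{deal}_i(e)$, sending the new deal to its vertices. A vertex terminates when it is in $C$ or all its hyperedges are covered; a hyperedge terminates when covered. *)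

(* Defs.v *)
From HB Require Import structures.
From mathcomp Require Import all_boot all_order all_algebra.
From mathcomp Require Import all_classical all_reals all_analysis.
Set Implicit Arguments. Unset Strict Implicit. Unset Printing Implicit Defensive.
Import Order.TTheory GRing.Theory Num.Theory.
Local Open Scope ring_scope.

Section MWHVC.
Variable R : realType.
Variable V : finType.
Variable H : {set {set V}}.
Variable w : V -> R.
Variables (beta alpha : R).

Definition incident (v : V) : {set {set V}} := [set e in H | v \in e].
Definition deg (v : V) : nat := #|incident v|.
Definition maxdeg : nat := \max_(v : V) deg v.

Record state := State {
  inC : {set V};
  covered : {set {set V}};
  deal : {set V} -> R;
  delta : {set V} -> R
}.

Definition seqmin (r : V -> R) (s : seq V) : R :=
  match s with
  | [::] => 0
  | v :: s' => foldr (fun u m => Num.min (r u) m) (r v) s'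
  end.

Definition deal0 (e : {set V}) : R :=
  beta * seqmin (fun v => w v / (deg v)%:R) (enum e).
Definition init : state := State finset.set0 finset.set0 deal0 deal0.

Definition residual (s : state) (v : V) : {set {set V}} :=
  [set e in incident v | e \notin covered s].
Definition terminated (s : state) (v : V) : bool :=
  (v \in inC s) || (residual s v == finset.set0).

Definition joiners (s : state) : {set V} :=
  [set v | ~~ terminated s v &
           (1 - beta) * w v <= \sum_(e in incident v) delta s e].

Definition step (s : state) : state :=
  let J := joiners s in
  let cov' := covered s :|: [set e in H | [exists v in e, v \in J]] in
  let raise (e : {set V}) :=
    [forall v in e,
      \sum_(e' in incident v | e' \notin cov') deal s e' <= beta / alpha * w v] in
  let deal' (e : {set V}) :=
    if e \in cov' then deal s e
    else if raise e then alpha * deal s e else deal s e in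
  State (inC s :|: J) cov' deal'
        (fun e => if e \in cov' then delta s e else delta s e + deal' e).

Definition run (n : nat) : state := iter n step init.

End MWHVC.

(* Main.v *)
Require Import Defs.
From HB Require Import structures.
From mathcomp Require Import all_boot all_order all_algebra.
From mathcomp Require Import all_classical all_reals all_analysis.
Import Order.TTheory GRing.Theory Num.Theory.
Local Open Scope ring_scope.
From mathcomp Require Import ring lra.

Lemma seqmin_spec (R : realType) (V : finType) (r : V -> R) (s : seq V) :
  s != [::] -> exists2 u, u \in s & seqmin r s = r u /\ forall x, x \in s -> seqmin r s <= r x.
Proof.
case: s => [//|v s'] _ /=.
elim: s' => [|x s' [u hu [IH1 IH2]]] /=.
  exists v; first by rewrite inE.
  by split=> // x; rewrite inE => /eqP ->.
rewrite IH1.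
have key : forall z, z \in [:: v, x & s'] -> z = x \/ z \in v :: s'.
  move=> z; rewrite !inE => /orP [->|/orP [/eqP ->|->]]; rewrite ?orbT; by [right|left|right].
have [hle|hlt] := leP (r x) (r u).
- exists x; first by rewrite !inE eqxx orbT.
  split=> // z /key [->//|hz].
  by apply: le_trans hle _; rewrite -IH1; apply: IH2.
- exists u; first by move: hu; rewrite !inE => /orP [->|->]; rewrite ?orbT.
  split=> // z /key [->|hz]; first exact: ltW.
  by rewrite -IH1; apply: IH2.
Qed.

Section Algo.
Variables (R : realType) (V : finType) (H : {set {set V}}) (w : V -> R) (beta alpha : R).
Hypotheses (hb0 : 0 < beta) (hb1 : beta < 1) (ha : 1 < alpha)
  (hw : forall v, 0 <= w v) (hH : forall e, e \in H -> e != finset.set0).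

Local Notation s i := (run H w beta alpha i).
Local Notation stp := (step H w beta alpha).

Definition Phi (st : state R V) (v : V) : R := \sum_(e in incident H v) delta st e.

Lemma runS i : s i.+1 = stp (s i).
Proof. by rewrite /run iterS. Qed.

Lemma covered_step st : covered (stp st) =
  covered st :|: [set e in H | [exists v in e, v \in joiners H w beta st]].
Proof. by []. Qed.

Lemma deal0_ge0 e : 0 <= deal0 H w beta e.
Proof.
rewrite /deal0 mulr_ge0 //; first exact: ltW.
case: (enum e) => [|v l] /=; first by [].
elim: l => [|x l IH] /=; first by rewrite divr_ge0.
by rewrite le_min IH divr_ge0.
Qed.

Lemma deal_step_ge st e : 0 <= deal st e -> deal st e <= deal (stp st) e.
Proof.
move=> h; rewrite /step /=.
case: ifP => // _; case: ifP => // _.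
by rewrite ler_peMl // ltW.
Qed.

Lemma deal_ge0 i e : 0 <= deal (s i) e.
Proof.
elim: i e => [|i IH] e; first exact: deal0_ge0.
by rewrite runS; exact: (le_trans (IH e) (deal_step_ge _ _ (IH e))).
Qed.

Lemma delta_step st e : (forall e, 0 <= deal st e) ->
  delta st e + (if e \in covered (stp st) then 0 else deal st e) <= delta (stp st) e.
Proof.
move=> h; rewrite covered_step /step /=.
case: ifP => _; first by rewrite addr0.
by rewrite lerD2l; case: ifP => // _; rewrite ler_peMl // ltW.
Qed.

Lemma Phi_step st v : (forall e, 0 <= deal st e) ->
  Phi st v + \sum_(e in incident H v | e \notin covered (stp st)) deal st e
  <= Phi (stp st) v.
Proof.
move=> h; rewrite /Phi big_mkcondr /= -big_split /=.
apply: ler_sum => e _.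
apply: le_trans (delta_step _ e h).
by case: (e \in covered (stp st)) => /=; rewrite ?lexx.
Qed.

Lemma Phi_mono st v : (forall e, 0 <= deal st e) -> Phi st v <= Phi (stp st) v.
Proof.
move=> h; apply: le_trans (Phi_step _ v h).
by rewrite lerDl sumr_ge0.
Qed.

Lemma Phi_ge0 i v : 0 <= Phi (s i) v.
Proof.
elim: i => [|i IH].
  by rewrite /Phi sumr_ge0 // => e _; apply: deal0_ge0.
by rewrite runS; exact: (le_trans IH (Phi_mono _ v (deal_ge0 i))).
Qed.

Lemma cov_step st : covered st \subset covered (stp st).
Proof. by rewrite covered_step; apply: finset.subsetUl. Qed.

Lemma cov_mono i j : (i <= j)%N -> covered (s i) \subset covered (s j).
Proof.
move=> /subnK <-; elim: (j - i)%N => [|k IH] //.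
by rewrite addSn runS; apply: fintype.subset_trans IH (cov_step _).
Qed.

Lemma cov_sub i : covered (s i) \subset H.
Proof.
elim: i => [|i IH]; first by rewrite finset.sub0set.
rewrite runS covered_step finset.subUset IH /=.
by apply/fintype.subsetP => e; rewrite inE => /andP [].
Qed.

Lemma inC_cov i v e : v \in inC (s i) -> e \in H -> v \in e -> e \in covered (s i).
Proof.
elim: i => [|i IH]; first by rewrite /= inE.
rewrite runS covered_step /step /= inE => /orP [hv|hv] he hve; rewrite inE.
  by rewrite IH.
apply/orP; right; rewrite inE he /=.
by apply/existsP; exists v; rewrite hve.
Qed.

Lemma nojoin i e v : e \in H -> e \notin covered (s i.+1) -> v \in e ->
  Phi (s i) v < (1 - beta) * w v.
Proof.
move=> he hc hv.
have hJ : v \notin joiners H w beta (s i).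
  apply: contra hc => hJ; rewrite runS covered_step inE; apply/orP; right.
  by rewrite inE he; apply/existsP; exists v; rewrite hv.
have hc0 : e \notin covered (s i).
  by apply: contra hc => hc; rewrite runS (fintype.subsetP (cov_step _)).
have hT : ~~ terminated H (s i) v.
  rewrite /terminated negb_or; apply/andP; split.
    by apply: contra hc0 => hC; apply: inC_cov hC he hv.
  apply/finset.set0Pn; exists e; rewrite !inE he hv /=; exact: hc0.
move: hJ; rewrite inE hT /= -ltNge; done.
Qed.


Lemma key_step st e : (forall e, 0 <= deal st e) -> e \in H -> e \notin covered (stp st) ->
  (deal (stp st) e = alpha * deal st e /\ forall v, v \in e -> alpha * deal st e <= beta * w v)
  \/ (deal (stp st) e = deal st e /\ exists2 v, v \in e &
        beta / alpha * w v < \sum_(e' in incident H v | e' \notin covered (stp st)) deal st e').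
Proof.
move=> h he hc.
have hc' := hc; rewrite covered_step in hc'.
rewrite /step /=.
case: ifP => [hin|_]; first by case/negP: hc; exact: hin.
case: ifP => hr; [left|right]; split=> //.
- move=> v hv; move/forallP: hr => /(_ v); rewrite hv /= => hle.
  have : deal st e <= beta / alpha * w v.
    apply: le_trans hle.
    rewrite (bigD1 e) /=; last by rewrite hc andbT !inE he hv.
    by rewrite lerDl sumr_ge0.
  have ha0 : 0 < alpha by apply: lt_trans ha.
  by rewrite -(ler_pM2l ha0) mulrA mulrCA divff ?mulr1 // gt_eqF.
- move/negbT: hr; rewrite negb_forall => /existsP [v]; rewrite negb_imply => /andP [hv hlt].
  exists v => //; rewrite ltNge; exact: hlt.
Qed.

Local Notation Dl := ((maxdeg H)%:R : R).

Lemma deg_pos v e : e \in H -> v \in e -> (0 < deg H v)%N.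
Proof. by move=> he hv; apply/card_gt0P; exists e; rewrite inE he hv. Qed.

Lemma deg_le v : (deg H v <= maxdeg H)%N.
Proof. exact: (@bigop.leq_bigmax V (deg H) v). Qed.

Lemma deal0_min e : e \in H -> exists2 u, u \in e &
  deal0 H w beta e = beta * (w u / (deg H u)%:R).
Proof.
move=> he.
have hne : enum e != [::].
  case/finset.set0Pn: (hH _ he) => x hx; apply/eqP => h0.
  by move: hx; rewrite -mem_enum h0.
have [u hu [h1 _]] := seqmin_spec _ _ (fun v => w v / (deg H v)%:R) _ hne.
by exists u; [rewrite -mem_enum | rewrite /deal0 h1].
Qed.

Lemma deal_cov st e : e \in covered (stp st) -> deal (stp st) e = deal st e.
Proof. by rewrite /step /= => hc; rewrite hc. Qed.

Lemma deal_ge_init i e : deal0 H w beta e <= deal (s i) e.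
Proof.
elim: i => [|i IH] //.
by rewrite runS; exact: (le_trans IH (deal_step_ge _ _ (deal_ge0 i e))).
Qed.

Lemma deal_bound i e : e \in H -> deal (s i) e <= Dl * deal0 H w beta e.
Proof.
move=> he; have [u hu hd] := deal0_min _ he.
have hdu := deg_pos _ _ he hu.
have hDu : (deg H u)%:R * deal0 H w beta e <= Dl * deal0 H w beta e.
  by rewrite ler_wpM2r ?deal0_ge0 // ler_nat deg_le.
have hbw : beta * w u = (deg H u)%:R * deal0 H w beta e.
  have hd0 : (deg H u)%:R != 0 :> R by rewrite pnatr_eq0 -lt0n.
  by rewrite hd; field.
elim: i => [|i IH].
  apply: le_trans hDu; rewrite ler_peMl ?deal0_ge0 //.
  by rewrite (ler_nat _ 1) hdu.
rewrite runS; case: (boolP (e \in covered (stp (s i)))) => hc.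
  by rewrite deal_cov.
case: (key_step _ _ (deal_ge0 i) he hc) => [[-> hv]|[-> _]] //.
by apply: le_trans (hv u hu) _; rewrite hbw.
Qed.

Lemma wpos n e v : e \in H -> e \notin covered (s n.+1) -> v \in e -> 0 < w v.
Proof.
move=> he hc hv.
have hc1 : e \notin covered (s 1).
  by apply: contra hc => h1; apply: (fintype.subsetP (cov_mono 1 n.+1 isT)) h1.
have := nojoin _ _ _ he hc1 hv.
move/(le_lt_trans (Phi_ge0 0 v)).
by rewrite pmulr_rgt0 // subr_gt0.
Qed.


Lemma main_bound (f n : nat) e : e \in H -> (#|e| <= f)%N -> e \notin covered (s n.+1) ->
  n%:R <= ln Dl / ln alpha + f%:R * (alpha / beta).
Proof.
move=> he hf hc.
have hcov k : (k <= n)%N -> e \notin covered (s k.+1).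
  by move=> hk; apply: contra hc => h1; apply: (fintype.subsetP (cov_mono k.+1 n.+1 hk)) h1.
have hwp v : v \in e -> 0 < w v by move=> hv; exact: (wpos n e v he hc hv).
have [u hu hd] := deal0_min _ he.
have hdu := deg_pos _ _ he hu.
have hd0 : 0 < deal0 H w beta e.
  by rewrite hd mulr_gt0 // divr_gt0 ?hwp // ltr0n.
have hdi i : 0 < deal (s i) e by apply: lt_le_trans hd0 (deal_ge_init i e).
have hla : 0 < ln alpha by rewrite ln_gt0.
have ha0 : 0 < alpha by apply: lt_trans ha.
pose P i := ln (deal (s i) e) / ln alpha +
  \sum_(v in e) (alpha / (beta * w v)) * Phi (s i) v.
have hstep i : (i <= n)%N -> P i + 1 <= P i.+1.
  move=> hi; rewrite /P runS.
  have hci := hcov i hi; rewrite runS in hci.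
  have hmono : \sum_(v in e) alpha / (beta * w v) * Phi (s i) v <=
      \sum_(v in e) alpha / (beta * w v) * Phi (stp (s i)) v.
    apply: ler_sum => v hv; rewrite ler_wpM2l ?(Phi_mono _ _ (deal_ge0 i)) //.
    by rewrite ltW // divr_gt0 // mulr_gt0 // hwp.
  case: (key_step _ _ (deal_ge0 i) he hci) => [[-> _]|[-> [v hv hlt]]].
  - rewrite lnM ?posrE // ?mulr_gt0 //. 
    rewrite mulrDl divff ?gt_eqF //.
    move: hmono; set a := ln _ / _; set b := \sum_(_ in _) _; set c := \sum_(_ in _) _.
    lra.
  - rewrite -addrA lerD2l.
    rewrite (bigD1 v) //= [X in _ <= X](bigD1 v) //= addrAC lerD //; last first.
      apply: ler_sum => x /andP [hx _]; rewrite ler_wpM2l ?(Phi_mono _ _ (deal_ge0 i)) //.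
      by rewrite ltW // divr_gt0 // mulr_gt0 // hwp.
    have hc0 : 0 < alpha / (beta * w v) by rewrite divr_gt0 // mulr_gt0 // hwp.
    apply: le_trans (ler_wpM2l (ltW hc0) (Phi_step _ v (deal_ge0 i))).
    rewrite mulrDr lerD2l.
    have -> : 1 = alpha / (beta * w v) * (beta / alpha * w v).
      have := hwp v hv; have := hb0; have := ha0.
      move=> h1 h2 h3; field.
      by rewrite !gt_eqF.
    by rewrite ler_pM2l // ltW.
have hind k : (k <= n)%N -> P 0%N + k%:R <= P k.
  elim: k => [|k IH] hk; first by rewrite addr0.
  apply: le_trans (hstep k (ltnW hk)).
  by rewrite -natr1 addrA lerD2r IH // ltnW.
have hP0 : ln (deal (s 0) e) / ln alpha <= P 0%N.
  rewrite /P lerDl sumr_ge0 // => v hv; rewrite mulr_ge0 ?Phi_ge0 //.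
  by rewrite divr_ge0 ?mulr_ge0 ?ltW ?hwp.
change (deal (s 0) e) with (deal0 H w beta e) in hP0.
have hDpos : 0 < Dl by rewrite ltr0n; apply: leq_trans hdu (deg_le u).
have hPn : P n <= ln Dl / ln alpha + ln (deal0 H w beta e) / ln alpha + f%:R * (alpha / beta).
  rewrite /P lerD //.
    rewrite -mulrDl ler_wpM2r ?invr_ge0 ?(ltW hla) // -lnM ?posrE //.
    by rewrite ler_ln ?posrE ?(hdi n) ?(mulr_gt0 hDpos hd0) //; exact: deal_bound n e he.
  apply: le_trans (_ : \sum_(v in e) alpha / beta <= _).
    apply: ler_sum => v hv.
    have hn := nojoin _ _ _ he (hcov n (leqnn n)) hv.
    apply: le_trans (ler_wpM2l _ (ltW hn)) _.
      by rewrite ltW // divr_gt0 // mulr_gt0 // hwp.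
    have hwv := hwp v hv.
    rewrite (_ : alpha / (beta * w v) * ((1 - beta) * w v) = alpha / beta * (1 - beta)).
      by rewrite ler_piMr ?divr_ge0 ?(ltW ha0) ?(ltW hb0) // lerBlDr lerDl (ltW hb0).
    by field; rewrite !gt_eqF.
  rewrite sumr_const -[_ *+ #|e|]mulr_natl ler_wpM2r ?divr_ge0 ?(ltW ha0) ?(ltW hb0) // ler_nat.
  exact: hf.
have := le_trans (hind n (leqnn n)) hPn.
lra.
Qed.

Lemma cover_all f T : (forall e, e \in H -> (#|e| <= f)%N) -> (1 <= maxdeg H)%N ->
  1 + ln Dl / ln alpha + f%:R * (alpha / beta) < T%:R -> covered (s T) = H.
Proof.
move=> hf hD hT.
apply/eqP; rewrite finset.eqEsubset cov_sub /=; apply/fintype.subsetP => e he.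
apply/negPn/negP => hc.
have hla : 0 < ln alpha by rewrite ln_gt0.
have hD1 : 1 <= Dl by rewrite (ler_nat _ 1).
have hp1 : 0 <= ln Dl / ln alpha by rewrite divr_ge0 ?ln_ge0 // ltW.
have ha0 : 0 < alpha by apply: lt_trans ha.
have hp2 : 0 <= f%:R * (alpha / beta) by rewrite mulr_ge0 // divr_ge0 // ltW.
case: T hT hc => [|n] hT hc.
  by move: hT; rewrite (_ : (0%:R : R) = 0) //; lra.
have := main_bound f n e he (hf e he) hc.
rewrite -natr1 in hT; lra.
Qed.

End Algo.

Lemma e_lt3 (R : realType) : expR 1 < 3 :> R.
Proof.
set a : R := expR (- (1/6)).
have ha : 5/6 <= a by rewrite /a; apply: le_trans (expR_ge1Dx _); lra.
have hz : expR (-1) = a ^+ 6.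
  by rewrite /a -expRM_natl; congr expR; field.
have h2 : 25/36 <= a * a by nra.
have h4 : (25/36) * (25/36) <= (a * a) * (a * a).
  by apply: ler_pM => //; lra.
have h6 : (25/36) * (25/36) * (25/36) <= (a * a) * (a * a) * (a * a).
  apply: ler_pM => //; try lra; nra.
have hz' : 1/3 < expR (-1) :> R.
  rewrite hz (_ : a ^+ 6 = (a*a)*(a*a)*(a*a)); last by ring.
  have : 1/3 < (25/36)*(25/36)*(25/36) :> R by lra.
  lra.
have := expRxMexpNx_1 (1 : R).
have := expR_gt0 (1 : R).
nra.
Qed.

Lemma two_ln_le (R : realType) (y : R) : 0 < y -> 2 * ln y <= y.
Proof.
move=> hy.
set t := Num.sqrt y.
have ht : 0 < t by rewrite sqrtr_gt0.
have hyt : y = t * t by rewrite -expr2 sqr_sqrtr // ltW.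
have hl : ln y = ln t + ln t by rewrite hyt lnM ?posrE.
have hlt : ln t <= t - 1.
  have h := @le_ln1Dx R (t - 1).
  rewrite (_ : 1 + (t - 1) = t) in h; last by ring.
  apply: h; lra.
have h2 : 0 <= (t - 2) * (t - 2) by rewrite -expr2 sqr_ge0.
rewrite hl; rewrite [X in _ <= X]hyt; lra.
Qed.

Lemma numeric (R : realType) (gamma : R) (f : nat) (eps D : R) :
  0 < gamma < 1 -> (1 <= f)%N -> 0 < eps <= 1 -> 3 <= D ->
  let beta := eps / (f%:R + eps) in
  let L := ln D / ln (ln D) in
  let alpha := if f%:R / beta < L `^ gamma then L `^ (1 - gamma) else 2 in
  let K := 2 + 2/(1-gamma) + 2 `^ gamma^-1 / ln 2 + 4 / ln (ln 3) in
  [/\ 0 < beta, beta < 1, 1 < alpha &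
     1 + ln D / ln alpha + f%:R * (alpha / beta) <
       K * (L + (f%:R ^+ 2 / eps) `^ gamma^-1 * ln (ln D))].
Proof.
move=> /andP [hg0 hg1] hf /andP [he0 he1] hD beta L alpha K.
have hf1 : 1 <= f%:R :> R by rewrite (ler_nat _ 1).
have hfe : 0 < f%:R + eps by lra.
have hb0 : 0 < beta by rewrite divr_gt0.
have hb1 : beta < 1 by rewrite ltr_pdivrMr //; lra.
have hl3 : 1 < ln (3 : R).
  have := e_lt3 R; rewrite -ltr_ln ?posrE ?expR_gt0 // expRK; exact.
set x := ln D.
have hx : 1 < x by apply: lt_le_trans hl3 _; rewrite ler_ln ?posrE //; lra.
set y := ln x.
set c0 := ln (ln (3 : R)).
have hc0 : 0 < c0 by rewrite ln_gt0.
have h3x : ln 3 <= x by rewrite /x ler_ln ?posrE //; lra.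
have hy : c0 <= y by rewrite ler_ln ?posrE //; lra.
have hy0 : 0 < y by lra.
have hyx : y < x by apply: ln_sublinear; lra.
have hL : 1 < L by rewrite /L -/x -/y ltr_pdivlMr //; lra.
have hxL : x = L * y by rewrite /L -/x -/y mulrVK // unitfE gt_eqF.
set a := f%:R ^+ 2 / eps.
have ha1 : 1 <= a.
  rewrite /a ler_pdivlMr // mul1r; nra.
set M := a `^ gamma^-1.
have hgi : 1 <= gamma^-1 by rewrite invf_ge1 // ltW.
have haM : a <= M by apply: le1r_powR.
have hM0 : 0 <= M by apply: powR_ge0.
have hK1 : 0 <= 2 / (1 - gamma) by rewrite divr_ge0 //; lra.
have hK2 : 0 <= (2 : R) `^ gamma^-1 / ln 2 by rewrite divr_ge0 ?powR_ge0 // ln_ge0 //; lra.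
have hK3 : 0 <= 4 / c0 by rewrite divr_ge0 //; lra.
have hfb : f%:R / beta = f%:R * (f%:R + eps) / eps.
  rewrite /beta; field; apply/andP; split; rewrite gt_eqF //.
rewrite /alpha; case: ifP => hc.
-
  have hlnL : ln L = y - ln y by rewrite /L -/x -/y ln_div ?posrE -/y //; lra.
  have h2y := @two_ln_le R y hy0.
  have hlnL2 : y / 2 <= ln L by rewrite hlnL; lra.
  have hlnL0 : 0 < ln L by lra.
  have hal : 1 < L `^ (1 - gamma).
    rewrite /powR gt_eqF ?expR_gt1; last lra.
    by rewrite mulr_gt0 //; lra.
  have hLL : L `^ gamma * L `^ (1 - gamma) = L.
    rewrite -powRD; last by rewrite (gt_eqF (lt_trans ltr01 hL)) implybT.
    by rewrite addrC subrK powRr1 //; lra.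
  have hfa : f%:R * (L `^ (1 - gamma) / beta) < L.
    apply: lt_le_trans (_ : L `^ gamma * L `^ (1-gamma) <= L); last by rewrite hLL.
    rewrite mulrA mulrAC ltr_pM2r //; lra.
  have hlD : ln D / ln (L `^ (1 - gamma)) <= 2 / (1 - gamma) * L.
    rewrite ln_powR -/x.
    have hg' : 0 < 1 - gamma by lra.
    apply: le_trans (_ : x / ((1 - gamma) * (y / 2)) <= _).
      rewrite ler_wpM2l ?(ltW (lt_trans _ hx)) // lef_pV2 ?posrE ?mulr_gt0 ?divr_gt0 //.
      by rewrite ler_pM2l.
    rewrite hxL le_eqVlt; apply/orP; left; apply/eqP; field.
    by rewrite !gt_eqF.
  have hMy : 0 <= M * y by rewrite mulr_ge0 // ltW.
  split => //.
  have h1 : 1 + ln D / ln (L `^ (1 - gamma)) + f%:R * (L `^ (1 - gamma) / beta)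
      < (2 + 2 / (1 - gamma)) * L by lra.
  apply: lt_le_trans h1 _.
  have hK0 : 0 <= K by rewrite /K; lra.
  apply: le_trans (_ : K * L <= _).
    by rewrite ler_wpM2r ?(ltW (lt_trans ltr01 hL)) // /K; lra.
  by rewrite ler_wpM2l // lerDl.
-
  move/negbT: hc; rewrite -leNgt => hc.
  have hfb2 : f%:R / beta <= 2 * a.
    rewrite hfb /a mulrA ler_wpM2r ?invr_ge0 ?(ltW he0) //; nra.
  have hLM : L <= (2 : R) `^ gamma^-1 * M.
    rewrite -powRM //; last lra.
    have -> : L = (L `^ gamma) `^ gamma^-1.
      by rewrite -powRrM divff ?gt_eqF // powRr1 //; lra.
    apply: ge0_ler_powR; rewrite ?invr_ge0 ?(ltW hg0) ?nnegrE ?powR_ge0 //.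
      by rewrite mulr_ge0 //; lra.
    exact: le_trans hc hfb2.
  have hl2 : 0 < ln (2 : R) by rewrite ln_gt0 //; lra.
  have h1 : ln D / ln 2 <= (2 : R) `^ gamma^-1 / ln 2 * (M * y).
    rewrite -/x hxL (_ : (2 : R) `^ gamma^-1 / ln 2 * (M * y) = (2 `^ gamma^-1 * M) * y / ln 2); last by ring.
    by rewrite ler_wpM2r ?invr_ge0 ?(ltW hl2) // ler_wpM2r ?(ltW hy0).
  have h2 : f%:R * (2 / beta) <= 4 / c0 * (M * y).
    have : f%:R * (2 / beta) <= 4 * a by rewrite mulrCA mulrA; nra.
    move=> h; apply: le_trans h _.
    have : M <= M * (y / c0) by rewrite ler_peMr // ler_pdivlMr // mul1r.
    have -> : 4 / c0 * (M * y) = 4 * (M * (y / c0)) by field; rewrite gt_eqF.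
    nra.
  have hMy : 0 <= M * y by rewrite mulr_ge0 // ltW.
  have hK : (2 : R) `^ gamma^-1 / ln 2 + 4 / c0 <= K by rewrite /K; lra.
  have hK' : 2 <= K by rewrite /K; lra.
  split => //; first lra.
  have hLK : 2 * L <= K * L by rewrite ler_wpM2r // ltW // (lt_trans ltr01 hL).
  have hMK : ((2 : R) `^ gamma^-1 / ln 2 + 4 / c0) * (M * y) <= K * (M * y).
    by rewrite ler_wpM2r.
  move: h1; rewrite -/x => h1.
  rewrite mulrDr; rewrite mulrDl in hMK.
  clear - h1 h2 hL hLK hMK.
  lra.
Qed.

Theorem mainTheorem9 (R : realType) (gamma : R) :
  0 < gamma < 1 ->
  exists K : R, 0 < K /\
  forall (V : finType) (H : {set {set V}}) (f : nat) (w : V -> R) (eps : R),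
    (forall e, e \in H -> e != finset.set0 /\ (#|e| <= f)%N) ->
    (forall v, 0 <= w v) ->
    (3 <= maxdeg H)%N ->
    0 < eps <= 1 ->
    let Delta : R := (maxdeg H)%:R in
    let beta : R := eps / (f%:R + eps) in
    let L : R := ln Delta / ln (ln Delta) in
    let alpha : R := if f%:R / beta < L `^ gamma then L `^ (1 - gamma) else 2 in
    forall i : nat,
      K * (L + (f%:R ^+ 2 / eps) `^ gamma^-1 * ln (ln Delta)) <= i%:R ->
      covered (run H w beta alpha i) = H.
Proof.
move=> hg.
have [hg0 hg1] := andP hg.
exists (2 + 2/(1-gamma) + 2 `^ gamma^-1 / ln 2 + 4 / ln (ln 3)); split.
  have hl3 : 1 < ln (3 : R).
    have := e_lt3 R; rewrite -ltr_ln ?posrE ?expR_gt0 // expRK; exact.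
  have : 0 < ln (ln (3 : R)) by rewrite ln_gt0.
  have : 0 <= 2/(1-gamma) by rewrite divr_ge0 //; lra.
  have : 0 <= (2 : R) `^ gamma^-1 / ln 2 by rewrite divr_ge0 ?powR_ge0 // ln_ge0 //; lra.
  move=> h1 h2 h3.
  have : 0 <= 4 / ln (ln (3 : R)) by rewrite divr_ge0 //; lra.
  lra.
move=> V H f w eps hH hw hD heps Delta beta L alpha i hi.
have hf1 : (1 <= f)%N.
  rewrite lt0n; apply/negP => /eqP hf0.
  have hdeg : forall v, deg H v = 0%N.
    move=> v; apply/eqP; rewrite /deg cards_eq0; apply/eqP/setP => e.
    rewrite !inE; apply/negP => /andP [he hv].
    have [_] := hH e he; rewrite hf0 leqn0 cards_eq0 => /eqP h.
    by rewrite h inE in hv.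
  move: hD; rewrite /maxdeg big1 //.
have hD3 : 3 <= Delta by rewrite /Delta (ler_nat _ 3).
have [hb0 hb1 ha hineq] := numeric R gamma f eps Delta hg hf1 heps hD3.
apply: (@cover_all R V H w beta alpha hb0 hb1 ha hw (fun e he => proj1 (hH e he)) f i).
- by move=> e he; case: (hH e he).
- exact: leq_trans hD.
- exact: lt_le_trans hineq hi.
Qed.
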